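(* For every propositional formula $\pi$ that is neither a tautology nor a contradiction, the formula $\langle\ddagger\pi\rangle\top \land [\ddagger\pi](\lnot\Box\pi\land\lnot\Box\lnot\pi)$ is true at every world of every serial model (a model whose relation $R$ satisfies: every world has at least one $R$-successor).
   Context: Fix a countable non-empty set $\mathit{At}$ of atoms. Formulas are built from $\top$, atoms, $\lnot$, $\land$, $\Box$ and, for each propositional formula $\pi$, the operator $[\ddagger\pi]$ (''after forgetting whether $\pi$''); $\langle\ddagger\pi\rangle\varphi:=\lnot[\ddagger\pi]\lnot\varphi$, other connectives as usual. A model is $\mathcal{M}=\langle W,R,V\rangle$ with $W\neq\varnothing$, $R\subseteq W\times W$, $V:\mathit{At}\to\mathcal{P}(W)$; standard Kripke semantics for $\Box$. A literal is an atom or its negation; a clause is a finite set $D$ of literals read as $\bigvee D$ ($\bigvee\varnothing:=\bot$), tautological if it contains $p$ and $\lnot p$ for some $p$. For propositional $\pi$, $\mathcal{C}(\pi)$ is the set of non-tautological clauses $D$ with $\models\pi\to\bigvee D$ and no $D'\subsetneq D$ with $\models\pi\to\bigvee D'$. For a model $\mathcal{M}$ and a finite family $(D_i)_{i\in I}$ of non-tautological clauses, $0\notin I$, the model $\mathcal{M}^{(D_i)_{i\in I}}_u=\langle W',R',V'\rangle$ has $W'=W\times(\{0\}\cup I)$, $(w,i)R'(v,j)$ iff $wRv$, $(w,0)\in V'(p)$ iff $w\in V(p)$, and for $i\in I$: $(w,i)\in V'(p)$ iff $\lnot p\in D_i$, or $\{p,\lnot p\}\cap D_i=\varnothing$ and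 $w\in V(p)$. $\mathcal{M},w\models[\ddagger\pi]\varphi$ iff for all $D_1\in\mathcal{C}(\pi)$ and $D_2\in\mathcal{C}(\lnot\pi)$, $\mathcal{M}^{(D_1,D_2)}_u,(w,0)\models\varphi$. *)

(* Defs.v *)
From Stdlib Require Import List.
Import ListNotations.
Set Implicit Arguments.

Section Syntax.
Variable At : Type.

Inductive pform : Type :=
| PTop : pform
| PAtom : At -> pform
| PNot : pform -> pform
| PAnd : pform -> pform -> pform.

Inductive form : Type :=
| FTop : form
| FAtom : At -> form
| FNot : form -> form
| FAnd : form -> form -> form
| FBox : form -> form
| FForget : pform -> form -> form.

Fixpoint emb (p : pform) : form :=
  match p with
  | PTop => FTop
  | PAtom a => FAtom a
  | PNot q => FNot (emb q)
  | PAnd q r => FAnd (emb q) (emb r)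
  end.

Definition FDiaForget (pi : pform) (phi : form) : form :=
  FNot (FForget pi (FNot phi)).

Fixpoint peval (v : At -> bool) (p : pform) : Prop :=
  match p with
  | PTop => True
  | PAtom a => v a = true
  | PNot q => ~ peval v q
  | PAnd q r => peval v q /\ peval v r
  end.

Definition tautology (p : pform) : Prop := forall v, peval v p.
Definition contradiction (p : pform) : Prop := forall v, ~ peval v p.

(* literals and clauses; a clause is a finite set of literals, represented
   by a list (only membership matters) *)
Inductive literal : Type :=
| Pos : At -> literal
| Neg : At -> literal.

Definition lit_true (v : At -> bool) (l : literal) : Prop :=
  match l with
  | Pos a => v a = true
  | Neg a => v a = false
  end.

Definition clause := list literal.

Definition tautological (D : clause) : Prop :=
  exists p, In (Pos p) D /\ In (Neg p) D.

Definition entails_clause (p : pform) (D : clause) : Prop :=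
  forall v, peval v p -> exists l, In l D /\ lit_true v l.

Definition strict_subclause (D' D : clause) : Prop :=
  (forall l, In l D' -> In l D) /\ (exists l, In l D /\ ~ In l D').

Definition inC (p : pform) (D : clause) : Prop :=
  ~ tautological D /\ entails_clause p D /\
  ~ (exists D', strict_subclause D' D /\ entails_clause p D').

(* index set {0} ∪ I with I = {1,2} *)
Inductive idx : Type := I0 | I1 | I2.

Definition upd_R (W : Type) (R : W -> W -> Prop) : W * idx -> W * idx -> Prop :=
  fun x y => R (fst x) (fst y).

Definition upd_val_clause (W : Type) (V : At -> W -> Prop) (D : clause)
  (p : At) (w : W) : Prop :=
  In (Neg p) D \/ ((~ In (Pos p) D /\ ~ In (Neg p) D) /\ V p w).

Definition upd_V (W : Type) (V : At -> W -> Prop) (D1 D2 : clause)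
  : At -> W * idx -> Prop :=
  fun p x =>
    match snd x with
    | I0 => V p (fst x)
    | I1 => upd_val_clause V D1 p (fst x)
    | I2 => upd_val_clause V D2 p (fst x)
    end.

Fixpoint sat (f : form) (W : Type) (R : W -> W -> Prop) (V : At -> W -> Prop)
  (w : W) {struct f} : Prop :=
  match f with
  | FTop => True
  | FAtom a => V a w
  | FNot g => ~ sat g R V w
  | FAnd g h => sat g R V w /\ sat h R V w
  | FBox g => forall u, R w u -> sat g R V u
  | FForget pi g =>
      forall D1 D2, inC pi D1 -> inC (PNot pi) D2 ->
        sat g (upd_R R) (upd_V V D1 D2) (w, I0)
  end.

Definition serial (W : Type) (R : W -> W -> Prop) : Prop :=
  forall w, exists u, R w u.

End Syntax.

Arguments PTop {At}.
Arguments FTop {At}.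
Definition countable (T : Type) : Prop := exists f : T -> nat, forall x y, f x = f y -> x = y.

(* Main.v *)
Require Import Defs.
From Stdlib Require Import List Classical ClassicalEpsilon Lia Arith.
Import ListNotations.

Section Aux.
Variable At : Type.

Fixpoint atoms (p : pform At) : list At :=
  match p with
  | PTop => []
  | PAtom a => [a]
  | PNot q => atoms q
  | PAnd q r => atoms q ++ atoms r
  end.

Lemma peval_agree (p : pform At) (u v : At -> bool) :
  (forall a, In a (atoms p) -> u a = v a) -> (peval u p <-> peval v p).
Proof.
  induction p; simpl; intros H.
  - tauto.
  - rewrite H by auto. tauto.
  - rewrite IHp by auto. tauto.
  - rewrite IHp1, IHp2 by (intros; apply H; apply in_or_app; auto). tauto.
Qed.

Definition dec (P : Prop) : bool :=
  if excluded_middle_informative P then true else false.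

Lemma dec_true P : dec P = true <-> P.
Proof. unfold dec; destruct (excluded_middle_informative P); split; intros; try tauto; discriminate. Qed.

Definition cnt (D0 D : clause At) : nat := length (filter (fun l => dec (In l D)) D0).

Lemma filter_len_mono (A : Type) (f g : A -> bool) (L : list A) :
  (forall x, In x L -> f x = true -> g x = true) ->
  length (filter f L) <= length (filter g L).
Proof.
  induction L; simpl; intros H; auto.
  destruct (f a) eqn:E1.
  - rewrite (H a (or_introl eq_refl) E1). simpl. apply le_n_S. apply IHL; auto.
  - destruct (g a); simpl; [apply le_S|]; apply IHL; auto.
Qed.

Lemma filter_len_strict (A : Type) (f g : A -> bool) (L : list A) (y : A) :
  (forall x, In x L -> f x = true -> g x = true) -> In y L -> f y = false -> g y = true ->
  length (filter f L) < length (filter g L).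
Proof.
  induction L; simpl; intros H Hy Fy Gy; [contradiction|].
  destruct Hy as [<-|Hy].
  - rewrite Fy, Gy. simpl. apply le_n_S. apply filter_len_mono; auto.
  - destruct (f a) eqn:E1.
    + rewrite (H a (or_introl eq_refl) E1). simpl. apply le_n_S. apply IHL; auto.
    + destruct (g a); simpl.
      * apply le_S. apply IHL; auto.
      * apply IHL; auto.
Qed.

Lemma minimal_exists (p : pform At) (D0 : clause At) :
  ~ tautological D0 ->
  forall n D, cnt D0 D <= n -> (forall l, In l D -> In l D0) -> entails_clause p D ->
  exists E, inC p E.
Proof.
  intros HT n. induction n as [n IH] using lt_wf_ind. intros D Hc Hsub He.
  destruct (classic (exists D', strict_subclause D' D /\ entails_clause p D')) as [[D' [[Hs [l [Hl Hl']]] He']]|Hno].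
  - apply (IH (cnt D0 D') ) with D'; auto.
    + unfold cnt in *. eapply Nat.lt_le_trans; [|exact Hc].
      apply filter_len_strict with l.
      * intros x _ Hx. rewrite dec_true in Hx |- *. apply Hs; exact Hx.
      * auto.
      * unfold dec; destruct (excluded_middle_informative (In l D')); tauto.
      * apply dec_true; auto.
  - exists D. split; [|split; auto].
    intros [a [H1 H2]]. apply HT. exists a; auto.
Qed.

Definition flit (v : At -> bool) (a : At) : literal At :=
  if v a then Neg a else Pos a.

Lemma inC_exists (p : pform At) : ~ tautology p -> exists D, inC p D.
Proof.
  intros Hnt. apply not_all_ex_not in Hnt. destruct Hnt as [v Hv].
  set (D0 := map (flit v) (atoms p)).
  assert (HT : ~ tautological D0).
  { intros [a [H1 H2]]. unfold D0 in *. apply in_map_iff in H1, H2.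
    destruct H1 as [b [Eb _]]. destruct H2 as [c [Ec _]]. unfold flit in *.
    destruct (v b) eqn:Vb; try discriminate; destruct (v c) eqn:Vc; try discriminate.
    inversion Eb; inversion Ec; subst. congruence. }
  apply (minimal_exists p D0 HT (cnt D0 D0) D0); auto.
  intros u Hu. apply NNPP. intros Hno. apply Hv.
  apply (peval_agree p v u) ; [|exact Hu].
  intros a Ha. destruct (v a) eqn:Va, (u a) eqn:Ua; auto; exfalso; apply Hno;
    exists (flit v a); (split; [apply in_map; auto|]); unfold flit; rewrite Va; simpl; auto.
Qed.

Lemma sat_emb (W : Type) (R : W -> W -> Prop) (V : At -> W -> Prop) (x : W) (p : pform At) :
  sat (emb p) R V x <-> peval (fun a => dec (V a x)) p.
Proof.
  induction p; simpl.
  - tauto.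
  - rewrite dec_true. tauto.
  - rewrite IHp. tauto.
  - rewrite IHp1, IHp2. tauto.
Qed.

Lemma clause_false (W : Type) (V : At -> W -> Prop) (D : clause At) (x : W) :
  ~ tautological D ->
  forall l, In l D -> ~ lit_true (fun a => dec (upd_val_clause V D a x)) l.
Proof.
  intros HT l Hl. destruct l as [a|a]; simpl.
  - rewrite dec_true. unfold upd_val_clause. intros [H|[[H _] _]]; auto.
    apply HT. exists a; auto.
  - intros H. assert (dec (upd_val_clause V D a x) = true) by (apply dec_true; left; auto).
    congruence.
Qed.

End Aux.

Theorem corollary1 (At : Type) (HAtc : countable At) (HAtne : inhabited At)
  (pi : pform At) (Hnt : ~ tautology pi) (Hnc : ~ contradiction pi)
  (W : Type) (HW : inhabited W) (R : W -> W -> Prop) (V : At -> W -> Prop)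
  (Hser : serial R) (w : W) :
  sat (FAnd (FDiaForget pi FTop)
            (FForget pi (FAnd (FNot (FBox (emb pi)))
                              (FNot (FBox (FNot (emb pi)))))))
      R V w.
Proof.
  simpl. split.
  - intros H. destruct (inC_exists _ _ Hnt) as [D1 H1].
    assert (Hnt2 : ~ tautology (PNot pi)).
    { intros Ht. apply Hnc. intros v. exact (Ht v). }
    destruct (inC_exists _ _ Hnt2) as [D2 H2].
    exact (H D1 D2 H1 H2 I).
  - intros D1 D2 [T1 [E1 _]] [T2 [E2 _]]. destruct (Hser w) as [u Hu]. split.
    + intros Hb. specialize (Hb (u, I1) Hu).
      rewrite sat_emb in Hb. simpl in Hb. unfold upd_V in Hb. simpl in Hb.
      destruct (E1 _ Hb) as [l [Hl Ht]]. exact (clause_false _ _ V _ u T1 l Hl Ht).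
    + intros Hb. specialize (Hb (u, I2) Hu). apply Hb.
      rewrite sat_emb. simpl. unfold upd_V. simpl. apply NNPP. intros Hp.
      destruct (E2 _ Hp) as [l [Hl Ht]]. exact (clause_false _ _ V _ u T2 l Hl Ht).
Qed.
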